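(* Let $M:\alpha\mapsto M_\alpha$ be a matroid flock on a finite set $E$, let $\alpha\in\mathbb{Z}^E$, and let $J\subseteq E$. If $M_\alpha=M_{\alpha+e_J}$, then $\lambda_{M_\alpha}(J)=0$.
   Context: $e_J:=\sum_{i\in J}e_i$ ($e_i$ unit vectors), $\mathbf{1}:=e_E$. A matroid flock of rank $d$ on $E$ is a map $M$ assigning to each $\alpha\in\mathbb{Z}^E$ a matroid $M_\alpha$ on $E$ of rank $d$ with (MF1) $M_\alpha/i=M_{\alpha+e_i}\setminus i$ for all $\alpha$, $i$ (contraction, deletion); and (MF2) $M_\alpha=M_{\alpha+\mathbf{1}}$. For a matroid $N$ on $E$ with rank function $r_N$, the connectivity function is $\lambda_N(J):=r_N(J)+r_N(E\setminus J)-r_N(E)$. *)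

(* Defs.v *)
From mathcomp Require Import all_boot all_order all_algebra.
Set Implicit Arguments. Unset Strict Implicit. Unset Printing Implicit Defensive.
Import GRing.Theory Num.Theory.

Record matroid (E : finType) := Matroid {
  mrank :> {set E} -> nat;
  mrank_card : forall X, mrank X <= #|X|;
  mrank_mono : forall X Y : {set E}, X \subset Y -> mrank X <= mrank Y;
  mrank_submod : forall X Y : {set E},
    mrank (X :|: Y) + mrank (X :&: Y) <= mrank X + mrank Y
}.

Definition mat_rank (E : finType) (M : matroid E) : nat := M [set: E].

(* Contraction and deletion of an element i, as rank functions on subsets of
   E \ {i} (the ground set of M/i and M\i). *)
Definition contr_rank (E : finType) (M : matroid E) (i : E) (X : {set E}) : nat :=
  M (X :|: [set i]) - M [set i].
Definition del_rank (E : finType) (M : matroid E) (i : E) (X : {set E}) : nat :=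
  M X.

Definition contr_eq_del (E : finType) (M N : matroid E) (i : E) : Prop :=
  forall X : {set E}, X \subset [set~ i] -> contr_rank M i X = del_rank N i X.

Definition mat_eq (E : finType) (M N : matroid E) : Prop :=
  forall X : {set E}, M X = N X.

Definition evec (E : finType) (J : {set E}) : {ffun E -> int} :=
  [ffun k => Posz (k \in J)].
Definition vadd (E : finType) (a b : {ffun E -> int}) : {ffun E -> int} :=
  [ffun k => (a k + b k)%R].

Definition matroid_flock (E : finType) (d : nat)
    (M : {ffun E -> int} -> matroid E) : Prop :=
  [/\ forall a, mat_rank (M a) = d,
      forall a (i : E), contr_eq_del (M a) (M (vadd a (evec [set i]))) i
    & forall a, mat_eq (M a) (M (vadd a (evec [set: E])))].

(* Connectivity function lambda_N(J) = r(J) + r(E\J) - r(E) (an integer, in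
   fact nonnegative by submodularity). *)
Definition connectivity (E : finType) (N : matroid E) (J : {set E}) : int :=
  (Posz (N J) + Posz (N (~: J)) - Posz (N [set: E]))%R.

(* Main.v *)
Require Import Defs.
From mathcomp Require Import all_boot all_order all_algebra.
From mathcomp Require Import zify.
Import GRing.Theory Num.Theory.

Lemma vadd_split (E : finType) (a : {ffun E -> int}) (S : {set E}) (j : E) :
  j \in S ->
  vadd a (evec S) = vadd (vadd a (evec (S :\ j))) (evec [set j]).
Proof.
move=> jS; apply/ffunP => k; rewrite !ffunE !inE.
case: (eqVneq k j) => [->|_] /=; rewrite ?jS ?andbT //= -addrA //.
by rewrite addr0.
Qed.

Lemma flock_shift (E : finType) (d : nat) (M : {ffun E -> int} -> matroid E)
  (alpha : {ffun E -> int}) :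
  matroid_flock d M ->
  forall n (S : {set E}), #|S| = n -> forall X : {set E}, [disjoint X & S] ->
  M (vadd alpha (evec S)) X + M alpha S = M alpha (X :|: S).
Proof.
case=> _ MF1 _; elim=> [|n IH] S cS X dXS.
  move/eqP: cS; rewrite cards_eq0 => /eqP ->.
  have -> : vadd alpha (evec set0) = alpha.
    by apply/ffunP => k; rewrite !ffunE inE addr0.
  rewrite setU0; have := mrank_card (M alpha) set0; rewrite cards0.
  by case: (M alpha set0) => // _; rewrite addn0.
have [j jS] : exists j, j \in S.
  apply/set0Pn; rewrite -card_gt0 cS //.
have cS' : #|S :\ j| = n by move: cS; rewrite (cardsD1 j S) jS add1n => -[].
set a := vadd alpha (evec (S :\ j)).
rewrite (@vadd_split _ alpha _ _ jS) -/a.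
have jX : j \notin X.
  by apply/negP => jX; move: dXS; rewrite disjoints_subset => /subsetP /(_ j jX); rewrite inE jS.
have H1 := MF1 a j X.
have Xsub : X \subset [set~ j].
  by apply/subsetP => x xX; rewrite !inE; apply/negP => /eqP xj; move: jX; rewrite -xj xX.
move: (H1 Xsub); rewrite /contr_rank /del_rank => <-.
have dXj : [disjoint (X :|: [set j]) & S :\ j].
  have nS : forall x, x \in X -> x \notin S.
    by move=> x xX; move: dXS; rewrite disjoints_subset => /subsetP /(_ x xX); rewrite inE.
  rewrite disjoints_subset; apply/subsetP => x; rewrite !inE => /orP[xX|/eqP->].
    by rewrite (negbTE (nS x xX)) andbF.
  by rewrite eqxx.
have dj : [disjoint [set j] & S :\ j] by rewrite disjoints1 !inE eqxx.
have E1 := IH _ cS' _ dXj.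
have E2 := IH _ cS' _ dj.
have U1 : X :|: [set j] :|: S :\ j = X :|: S.
  by rewrite -setUA setD1K.
have U2 : [set j] :|: S :\ j = S by rewrite setD1K.
rewrite U1 in E1; rewrite U2 in E2.
have mono : M alpha S <= M alpha (X :|: S) by apply: mrank_mono; exact: subsetUr.
move: E1 E2 mono; rewrite /a; lia.
Qed.

Theorem mainTheorem17 (E : finType) (d : nat)
    (M : {ffun E -> int} -> matroid E) (alpha : {ffun E -> int}) (J : {set E}) :
  matroid_flock d M ->
  mat_eq (M alpha) (M (vadd alpha (evec J))) ->
  connectivity (M alpha) J = 0%R.
Proof.
move=> Hf Heq.
have H := @flock_shift _ _ _ alpha Hf _ _ (erefl #|J|) (~: J).
rewrite -Heq (setUC (~: J)) setUCr in H.
have := H _; rewrite disjoint_sym disjoints_subset setCK subxx => /(_ isT) {}H.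
by rewrite /connectivity -H addnC PoszD subrr.
Qed.
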